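(* Let $K$ be an idempotent semifield and $L$ a finite extension of $K$. Then $L$ is archimedean over $K$, i.e. for every $x\in L$ there exists $y\in K$ with $x+y=y$.
   Context: A semifield is a commutative semiring (both operations commutative monoids, distributive law) in which every nonzero element is a unit; it is idempotent if $x+x=x$ for all $x$. An extension of $K$ is a semifield $L$ with an injective homomorphism $K\to L$ (used to identify $K$ with its image); it is finite if $L$ is a finitely generated $K$-semimodule. *)

(* Defs.v *)
From HB Require Import structures.
From mathcomp Require Import all_boot all_order all_algebra.
Set Implicit Arguments. Unset Strict Implicit. Unset Printing Implicit Defensive.
Import GRing.Theory.
Local Open Scope ring_scope.

Definition is_semifield (K : comPzSemiRingType) : Prop :=
  forall x : K, x != 0 -> exists y : K, x * y = 1.

Definition is_idempotent (K : comPzSemiRingType) : Prop :=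
  forall x : K, x + x = x.

(* L is a finitely generated K-semimodule, the action being k . x := f k * x. *)
Definition finite_ext (K L : comPzSemiRingType) (f : {rmorphism K -> L}) : Prop :=
  exists s : seq L, forall x : L, exists c : nat -> K,
    x = \sum_(i < size s) f (c i) * s`_i.

Definition archimedean_over (K L : comPzSemiRingType) (f : {rmorphism K -> L}) : Prop :=
  forall x : L, exists y : K, x + f y = f y.

(* Main.v *)
Require Import Defs.
From HB Require Import structures.
From mathcomp Require Import all_boot all_order all_algebra.
Local Open Scope ring_scope.
Import GRing.Theory.

Theorem mainTheorem5 (K L : comPzSemiRingType) (f : {rmorphism K -> L}) :
  is_semifield K -> is_idempotent K -> is_semifield L ->
  injective f -> finite_ext f ->
  archimedean_over f.
Proof.
move=> _ idK sfL _ [s hs].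
pose le (a b : L) := a + b = b.
have one2 : (1 : L) + 1 = 1 by rewrite -(rmorph1 f) -rmorphD idK.
have idL : forall x : L, x + x = x by move=> x; rewrite -{1 2}(mulr1 x) -mulrDr one2 mulr1.
have le_trans : forall a b c, le a b -> le b c -> le a c.
  by move=> a b c hab hbc; rewrite /le -hbc addrA hab.
have le_addl : forall a b, le a (a + b) by move=> a b; rewrite /le addrA idL.
have le_mul : forall a b c, le a b -> le (c * a) (c * b).
  by move=> a b c h; rewrite /le -mulrDr h.
have le0 : forall a, le 0 a by move=> a; rewrite /le add0r.
have le_sum : forall n (F G : 'I_n -> L), (forall i, le (F i) (G i)) ->
    le (\sum_(i < n) F i) (\sum_(i < n) G i).
  move=> n F G h; apply: (big_ind2 le) => //.
  move=> x1 x2 y1 y2 h1 h2; rewrite /le.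
  by rewrite -[in RHS]h1 -[in RHS]h2 addrA -(addrA x1) (addrC y1) !addrA.
pose u := 1 + \sum_(i < size s) s`_i.
have su : forall i : 'I_(size s), le s`_i u.
  move=> i; apply: (le_trans _ (\sum_(i < size s) s`_i)); last first.
    by rewrite /le addrCA idL.
  by rewrite (bigD1 i) //=; apply: le_addl.
have bound : forall c : nat -> K,
    le (\sum_(i < size s) f (c i) * s`_i) (f (\sum_(i < size s) c i) * u).
  move=> c; rewrite rmorph_sum mulr_suml; apply: le_sum => i; exact: le_mul.
have [a ha] := hs (u * u).
have uA : le u (f (\sum_(i < size s) a i)).
  have h2 : le (u * u) (f (\sum_(i < size s) a i) * u) by rewrite ha; apply: bound.
  have [/eqP u0 | un0] := boolP (u == 0); first by rewrite u0; apply: le0.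
  have [v hv] := sfL u un0.
  have := le_mul _ _ v h2; rewrite /le.
  by rewrite ![v * _]mulrC -!mulrA hv !mulr1.
move=> x; have [c hc] := hs x.
exists ((\sum_(i < size s) c i) * (\sum_(i < size s) a i)).
rewrite rmorphM; apply: (le_trans _ _ _ _ (le_mul _ _ _ uA)).
rewrite hc; exact: bound.
Qed.
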